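(* Assume $|\mathbb O|\ge2$. Let $\mathcal I\subseteq\mathcal V$ and consider the PID opinion dynamics with initial states satisfying $x_i(0)=\theta$ for all $i\in\mathcal I$. The following are equivalent: (1) the system almost surely converges to the consensus state $(\theta,\dots,\theta)$, regardless of the initial opinions $x_i(0)\in\mathbb O$ of the nodes $i\in\mathcal V\setminus\mathcal I$; (2) every non-empty strictly cohesive subset of $\mathcal V$ contains at least one node of $\mathcal I$.
   Context: Let $n\ge1$, $\mathcal V=\{1,\dots,n\}$, and let $W=(w_{ij})$ be an $n\times n$ row-stochastic matrix (nonnegative entries, each row summing to $1$). The opinion set is a finite set of consecutive integers $\mathbb O=\{k,\dots,k+s\}$, and $\theta\in\mathbb O$ is a fixed ''truth''. For $x\in\mathbb O^n$, $i\in\mathcal V$, $z\in\mathbb O$, define $C^i_{\mathrm{social}}(z;x)=\sum_{j=1}^n w_{ij}|z-x_j|$ and $C^i_{\mathrm{cog}}(z)=|z-\theta|$, and $P_i(x)=\{z\in\mathbb O: C^i_{\mathrm{social}}(z;x)\le C^i_{\mathrm{social}}(x_i;x),\ |z-\theta|\le |x_i-\theta|\}$. PID opinion dynamics: starting from $x(0)$, at each time $t+1$ a node $i$ is chosen uniformly at random from $\mathcal V$ and sets $x_i(t+1)$ to an element chosen at random from $P_i(x(t))$, each element having positive probability; all other nodes keep their opinions. A set $\mathcal M\subseteq\mathcal V$ is strictly cohesive if $\sum_{j\in\mathcal M}w_{ij}>\tfrac12$ for every $i\in\mathcal M$. *)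

(* Defs.v *)
From HB Require Import structures.
From mathcomp Require Import all_boot all_order all_algebra.
From mathcomp Require Import all_classical all_reals all_analysis.
Set Implicit Arguments. Unset Strict Implicit. Unset Printing Implicit Defensive.
Import Order.TTheory GRing.Theory Num.Theory.
Local Open Scope ring_scope.
Local Open Scope classical_set_scope.

Notation state n := {ffun 'I_n -> int}.

Section PID.
Variables (R : realType) (n : nat) (W : 'I_n -> 'I_n -> R).
Variables (k : int) (s : nat) (theta : int).

Definition inO (z : int) : bool := (k <= z) && (z <= k + s%:Z).

Definition row_stochastic : Prop :=
  (forall i j, 0 <= W i j) /\ (forall i, \sum_(j < n) W i j = 1).

Definition C_social (i : 'I_n) (z : int) (x : state n) : R :=
  \sum_(j < n) W i j * `|((z - x j)%:~R : R)|.

Definition C_cog (z : int) : int := `|z - theta|%:Z.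

Definition Pset (i : 'I_n) (x : state n) (z : int) : bool :=
  [&& inO z, C_social i z x <= C_social i (x i) x & C_cog z <= C_cog (x i)].

(* Update law: q i x z is the probability that node i, when chosen in state x,
   adopts opinion z.  Only states in O^n matter
   (the chain never leaves O^n). *)
Definition valid_update (q : 'I_n -> state n -> int -> R) : Prop :=
  forall i (x : state n), (forall j, inO (x j)) ->
    (forall z, 0 <= q i x z) /\
    (forall z, (0 < q i x z) = Pset i x z) /\
    (\sum_(u < s.+1) q i x (k + u%:Z) = 1).

Definition trans (q : 'I_n -> state n -> int -> R) (x y : state n) : R :=
  \sum_(i < n)
     (if [forall j, (j != i) ==> (y j == x j)] then n%:R^-1 * q i x (y i) else 0).

Definition consensus : state n := [ffun _ => theta].

Definition strictly_cohesive (M : {set 'I_n}) : bool :=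
  [forall i in M, (1 / 2 : R) < \sum_(j in M) W i j].

Definition admissible (I : {set 'I_n}) (x0 : state n) : bool :=
  [forall i, inO (x0 i)] && [forall i in I, x0 i == theta].

(* X is a realization of the PID dynamics started at x0: each X t is a
   random variable (its level sets are measurable) and the finite-dimensional
   distributions are those of the Markov chain with initial state x0 and
   transition probabilities trans q. *)
Definition PID_process {d : measure_display} {T : measurableType d}
  (P : probability T R) (q : 'I_n -> state n -> int -> R) (x0 : state n)
  (X : nat -> T -> state n) : Prop :=
  (forall t y, measurable [set w | X t w = y]) /\
  (forall (t : nat) (xs : nat -> state n),
     P [set w | forall u, (u <= t)%N -> X u w = xs u] =
     ((if xs 0%N == x0 then 1 else 0) *
      \prod_(u < t) trans q (xs u) (xs u.+1))%:E).

(* Almost sure convergence to consensus (in the discrete set of states,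
   convergence means eventually equal). *)
Definition as_converges_to_consensus {d : measure_display} {T : measurableType d}
  (P : probability T R) (X : nat -> T -> state n) : Prop :=
  P [set w | exists T0 : nat, forall t, (T0 <= t)%N -> X t w = consensus] = 1%E.

End PID.

(* Main.v *)
Require Import Defs.
From HB Require Import structures.
From mathcomp Require Import all_boot all_order all_algebra.
From mathcomp Require Import all_classical all_reals all_analysis.
From mathcomp Require Import zify ring lra.
Import Order.TTheory GRing.Theory Num.Theory.
Local Open Scope ring_scope.

Set Implicit Arguments. Unset Strict Implicit. Unset Printing Implicit Defensive.

Section Basic.
Variables (R : realType) (n : nat) (W : 'I_n -> 'I_n -> R).
Variables (k : int) (s : nat) (theta : int).
Variable (q : 'I_n -> state n -> int -> R).
Hypothesis hn : (0 < n)%N.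
Hypothesis hq : valid_update W k s theta q.

Definition Sf := {ffun 'I_n -> 'I_s.+1}.
Definition emb (u : Sf) : state n := [ffun i => k + ((u i : nat)%:Z)].
Definition tr (u v : Sf) : R := trans q (emb u) (emb v).
Definition upd (u : Sf) (i : 'I_n) (w : 'I_s.+1) : Sf :=
  [ffun j => if j == i then w else u j].

Lemma emb_inO u j : inO k s (emb u j).
Proof. rewrite /inO ffunE; have := ltn_ord (u j); lia. Qed.

Lemma emb_allO u : forall j, inO k s (emb u j).
Proof. exact: emb_inO. Qed.

Lemma q_ge0 (x : state n) i z : (forall j, inO k s (x j)) -> 0 <= q i x z.
Proof. by move=> Hx; have [H _] := hq i Hx. Qed.

Lemma q_pos (x : state n) i z : (forall j, inO k s (x j)) -> (0 < q i x z) = Pset W k s theta i x z.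
Proof. by move=> Hx; have [_ [H _]] := hq i Hx. Qed.

Lemma q_sum (x : state n) i : (forall j, inO k s (x j)) ->
  \sum_(u < s.+1) q i x (k + u%:Z) = 1.
Proof. by move=> Hx; have [_ [_ H]] := hq i Hx. Qed.

Lemma trans_ge0 (x y : state n) : (forall j, inO k s (x j)) -> 0 <= trans q x y.
Proof.
move=> Hx; rewrite /trans; apply: sumr_ge0 => i _; case: ifP => // _.
by apply: mulr_ge0; [rewrite invr_ge0 ler0n | exact: q_ge0].
Qed.

Lemma tr_ge0 u v : 0 <= tr u v.
Proof. exact/trans_ge0/emb_allO. Qed.

Lemma emb_inj_coord (u v : Sf) j : emb u j = emb v j -> u j = v j.
Proof. rewrite !ffunE => /addrI /eqP; rewrite eqz_nat => /eqP H; exact: val_inj. Qed.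

Lemma emb_inj : injective emb.
Proof. by move=> u v H; apply/ffunP => j; apply: emb_inj_coord; rewrite H. Qed.

Lemma tr_sum1 u : \sum_v tr u v = 1.
Proof.
rewrite /tr /trans exchange_big /=.
transitivity (\sum_(i < n) (n%:R : R)^-1); last first.
  by rewrite sumr_const card_ord -(mulr_natr (n%:R^-1)) mulVf // pnatr_eq0 -lt0n.
apply: eq_bigr => i _.
rewrite (partition_big (fun v : Sf => v i) predT) //=.
transitivity (\sum_(w < s.+1) (n%:R : R)^-1 * q i (emb u) (k + (w : nat)%:Z)); last first.
  by rewrite -mulr_sumr q_sum ?mulr1 //; exact: emb_allO.
apply: eq_bigr => w _.
rewrite (bigD1 (upd u i w)) /=; last by rewrite ffunE eqxx.
rewrite big1 ?addr0.
  rewrite ifT; last first.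
    by apply/forallP => j; apply/implyP => Hj; rewrite !ffunE (negbTE Hj).
  by rewrite !ffunE eqxx.
move=> v /andP [/eqP Hvi Hne]; case: ifP => // /forallP H.
exfalso; move/negP: Hne; apply; apply/eqP/ffunP => j; rewrite ffunE.
case: eqP => [->|/eqP Hj] //.
by apply: emb_inj_coord; have /implyP := H j; move=> /(_ Hj) /eqP.
Qed.


Hypothesis hW : row_stochastic W.

Lemma W_ge0 i j : 0 <= W i j.
Proof. by case: hW => H _; exact: H. Qed.

Lemma sum_if (M : pred 'I_n) (B : 'I_n -> R) :
  \sum_j (if M j then B j else - B j) =
  \sum_(j | M j) B j - \sum_(j | ~~ M j) B j.
Proof.
rewrite (bigID M) /=; congr (_ + _); first by apply: eq_bigr => j ->.
by rewrite -sumrN; apply: eq_bigr => j /negbTE ->.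
Qed.

Lemma sumW_split i (M : pred 'I_n) :
  \sum_(j | M j) W i j + \sum_(j | ~~ M j) W i j = 1.
Proof. by case: hW => _ H; rewrite -(H i) [RHS](bigID M). Qed.

Lemma absR (m : int) : `|(m%:~R : R)| = (`|m|)%:~R.
Proof. by rewrite intr_norm. Qed.

Lemma Cle (x : state n) i (z a d : int) (M : pred 'I_n) :
  (forall j, if M j then `|z - x j| <= `|a - x j| + d
             else `|z - x j| + d <= `|a - x j|) ->
  C_social W i z x <= C_social W i a x +
     d%:~R * (\sum_(j | M j) W i j - \sum_(j | ~~ M j) W i j).
Proof.
move=> H; rewrite /C_social -sum_if mulr_sumr -big_split /=.
apply: ler_sum => j _; rewrite !absR.
have := H j; case: (M j) => Hj.
  rewrite [d%:~R * _]mulrC -mulrDr; apply: ler_wpM2l; first exact: W_ge0.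
  by rewrite -intrD ler_int.
rewrite mulrN [d%:~R * _]mulrC -mulrBr; apply: ler_wpM2l; first exact: W_ge0.
by rewrite lerBrDr -intrD ler_int.
Qed.

Lemma Cge (x : state n) i (z a d : int) (M : pred 'I_n) :
  (forall j, if M j then `|a - x j| + d <= `|z - x j|
             else `|a - x j| <= `|z - x j| + d) ->
  C_social W i a x +
     d%:~R * (\sum_(j | M j) W i j - \sum_(j | ~~ M j) W i j)
  <= C_social W i z x.
Proof.
move=> H; rewrite /C_social -sum_if mulr_sumr -big_split /=.
apply: ler_sum => j _; rewrite !absR.
have := H j; case: (M j) => Hj.
  rewrite [d%:~R * _]mulrC -mulrDr; apply: ler_wpM2l; first exact: W_ge0.
  by rewrite -intrD ler_int.
rewrite mulrN [d%:~R * _]mulrC -mulrBr; apply: ler_wpM2l; first exact: W_ge0.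
by rewrite lerBlDr -intrD ler_int.
Qed.

Lemma exists_max (f : 'I_n -> int) (j0 : 'I_n) : exists jm, forall j, f j <= f jm.
Proof.
case: (@arg_maxP _ _ 'I_n j0 xpredT f isT) => jm _ H.
by exists jm => j; exact: H.
Qed.

Lemma exists_min (f : 'I_n -> int) (j0 : 'I_n) : exists jm, forall j, f jm <= f j.
Proof.
case: (@arg_minP _ _ 'I_n j0 xpredT f isT) => jm _ H.
by exists jm => j; exact: H.
Qed.

Hypothesis htheta : inO k s theta.

Lemma step_exists (x : state n) (I : {set 'I_n}) :
  (forall j, inO k s (x j)) -> (forall j, j \in I -> x j = theta) ->
  (forall M : {set 'I_n}, M != finset.set0 -> strictly_cohesive W M ->
     exists2 i, i \in M & i \in I) ->
  x != consensus n theta ->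
  exists i z, Pset W k s theta i x z /\ (`|z - theta| < `|x i - theta|)%N.
Proof.
move=> HO HI Hcoh Hne.
have Hnc : forall M : {set 'I_n}, M != finset.set0 -> (forall j, j \in M -> x j != theta) ->
    exists2 i, i \in M & \sum_(j | j \in M) W i j <= 1/2.
  move=> M HM HMt; case: (boolP (strictly_cohesive W M)) => Hsc.
    by case: (Hcoh M HM Hsc) => i HiM HiI; have := HMt i HiM; rewrite HI // eqxx.
  move: Hsc; rewrite /strictly_cohesive => /forallPn [i]; rewrite negb_imply => /andP [HiM].
  by rewrite -leNgt => Hle; exists i.
have HOk : forall j, k <= x j <= k + s%:Z by move=> j; have := HO j; rewrite /inO.
move: htheta; rewrite /inO => /andP [Htk Hts].
have Hhalf : forall i (M : pred 'I_n), \sum_(j | M j) W i j <= 1/2 ->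
    \sum_(j | M j) W i j - \sum_(j | ~~ M j) W i j <= 0.
  move=> i M; have := sumW_split i M; lra.
case: (boolP [exists j, theta < x j]).
  case/existsP => j0 Hj0.
  have [jm Hjm] := exists_max x j0.
  set a := x jm.
  have Hat : theta < a by apply: lt_le_trans Hj0 (Hjm j0).
  have HM1 : [set j | x j == a] != finset.set0 by apply/set0Pn; exists jm; rewrite inE.
  have HM2 : forall j, j \in [set j | x j == a] -> x j != theta.
    by move=> j; rewrite inE => /eqP ->; rewrite gt_eqF.
  have [i HiM Hi] := Hnc _ HM1 HM2.
  move: HiM; rewrite inE => /eqP Hxi.
  exists i, (a - 1); split; last by rewrite Hxi; lia.
  apply/and3P; split.
  - by rewrite /inO; have := HOk jm; rewrite -/a; lia.
  - rewrite Hxi; apply: le_trans (@Cle x i (a - 1) a 1 (fun j => x j == a) _) _.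
      move=> j /=; case: eqP => [->|/eqP Hj]; first by lia.
      by have := Hjm j; rewrite -/a; lia.
    rewrite mulr1z mul1r -[X in _ <= X]addr0 lerD2l.
    by apply: Hhalf; move: Hi; under eq_bigl do rewrite inE.
  - by rewrite /C_cog Hxi; lia.
rewrite negb_exists => /forallP Hle.
have [j0 Hj0] : exists j0, x j0 < theta.
  apply/existsP; move: Hne; apply: contraR; rewrite negb_exists => /forallP H.
  apply/eqP/ffunP => j; rewrite ffunE; have := H j; have := Hle j; rewrite -!leNgt => H1 H2; apply/eqP; by rewrite eq_le H1 H2.
have [jm Hjm] := exists_min x j0.
set a := x jm.
have Hat : a < theta by apply: le_lt_trans (Hjm j0) Hj0.
have HM1 : [set j | x j == a] != finset.set0 by apply/set0Pn; exists jm; rewrite inE.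
have HM2 : forall j, j \in [set j | x j == a] -> x j != theta.
  by move=> j; rewrite inE => /eqP ->; rewrite lt_eqF.
have [i HiM Hi] := Hnc _ HM1 HM2.
move: HiM; rewrite inE => /eqP Hxi.
exists i, (a + 1); split; last by rewrite Hxi; lia.
apply/and3P; split.
- by rewrite /inO; have := HOk jm; rewrite -/a; lia.
- rewrite Hxi; apply: le_trans (@Cle x i (a + 1) a 1 (fun j => x j == a) _) _.
    move=> j /=; case: eqP => [->|/eqP Hj]; first by lia.
    by have := Hjm j; rewrite -/a; lia.
  rewrite mulr1z mul1r -[X in _ <= X]addr0 lerD2l.
  by apply: Hhalf; move: Hi; under eq_bigl do rewrite inE.
- by rewrite /C_cog Hxi; lia.
Qed.



Lemma inO_inord (y : int) : inO k s y -> k + ((inord (absz (y - k)) : 'I_s.+1) : nat)%:Z = y.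
Proof. rewrite /inO => /andP [H1 H2]; rewrite inordK; lia. Qed.

Definition cS : Sf := [ffun _ => inord (absz (theta - k))].

Lemma emb_cS : emb cS = consensus n theta.
Proof.
apply/ffunP => j; rewrite !ffunE inordK; move: htheta; rewrite /inO; first by lia.
by lia.
Qed.

Lemma emb_cS_j j : emb cS j = theta.
Proof. by rewrite emb_cS ffunE. Qed.

Lemma eq_cS (u : Sf) : (forall j, emb u j = theta) -> u = cS.
Proof. by move=> H; apply: emb_inj; apply/ffunP => j; rewrite H emb_cS_j. Qed.

Lemma q_zero (x : state n) i z : (forall j, inO k s (x j)) ->
  ~~ Pset W k s theta i x z -> q i x z = 0.
Proof.
move=> Hx HP; apply/eqP; rewrite eq_le q_ge0 // andbT leNgt q_pos //.
Qed.

Lemma tr_c v : v != cS -> tr cS v = 0.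
Proof.
move=> Hv; rewrite /tr /trans; apply: big1 => i _; case: ifP => // /forallP H.
rewrite q_zero ?mulr0 //; first exact: emb_allO.
apply/negP => /and3P [_ _]; rewrite /C_cog emb_cS_j subrr => Hc.
move/negP: Hv; apply; apply/eqP; apply: eq_cS => j.
case: (eqVneq j i) => [->|Hji]; first by move: Hc; lia.
by have /implyP /(_ Hji) /eqP -> := H j; rewrite emb_cS_j.
Qed.

Lemma tr_cc : tr cS cS = 1.
Proof.
have := tr_sum1 cS; rewrite (bigD1 cS) //= big1 ?addr0 //.
by move=> v Hv; exact: tr_c.
Qed.

Lemma trans_cons : trans q (consensus n theta) (consensus n theta) = 1.
Proof. by rewrite -emb_cS; exact: tr_cc. Qed.

Definition inI (I : {set 'I_n}) (u : Sf) : bool := [forall j in I, emb u j == theta].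

Definition V (u : Sf) : nat := \sum_j `|emb u j - theta|%N.

Lemma tr_closed I u v : inI I u -> 0 < tr u v -> inI I v.
Proof.
move=> /forall_inP Hu Hp; apply/forall_inP => j Hj.
have [i _ Hi] : exists2 i, true & 0 < (if [forall j, (j != i) ==> (emb v j == emb u j)]
     then n%:R^-1 * q i (emb u) (emb v i) else 0).
  apply/exists_inP; move: Hp; apply: contraLR; rewrite negb_exists_in => /forall_inP H.
  rewrite -leNgt /tr /trans; apply: sumr_le0 => i _; rewrite leNgt; exact: H.
move: Hi; case: ifP => [/forallP Hc|]; last by rewrite ltxx.
case: (eqVneq j i) Hj => [->|Hji] Hj Hq.
  have : Pset W k s theta i (emb u) (emb v i).
    rewrite -q_pos; last exact: emb_allO.
    by move: Hq; rewrite pmulr_rgt0 // invr_gt0 ltr0n.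
  case/and3P => _ _; rewrite /C_cog (eqP (Hu i Hj)) subrr => H; apply/eqP; move: H; lia.
by have /implyP /(_ Hji) /eqP -> := Hc j; exact: Hu.
Qed.


Section WithI.
Variable I : {set 'I_n}.
Hypothesis Hcoh : forall M : {set 'I_n}, M != finset.set0 -> strictly_cohesive W M ->
     exists2 i, i \in M & i \in I.

Lemma step_Sf u : inI I u -> u != cS ->
  exists v, [/\ inI I v, (V v < V u)%N & 0 < tr u v].
Proof.
move=> Hu Hne.
have HO := emb_allO u.
have HI : forall j, j \in I -> emb u j = theta by move=> j Hj; apply/eqP; move/forall_inP: Hu; apply.
have Hne' : emb u != consensus n theta.
  by rewrite -emb_cS; apply: contra Hne => /eqP /emb_inj ->.
have [i [z [HP Hlt]]] := step_exists HO HI Hcoh Hne'.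
have HzO : inO k s z by case/and3P: HP.
set w : 'I_s.+1 := inord (absz (z - k)).
have Hw : k + (w : nat)%:Z = z.
  by rewrite /w inordK; move: HzO; rewrite /inO; lia.
set v := upd u i w.
have Hev : forall j, emb v j = if j == i then z else emb u j.
  by move=> j; rewrite /v /emb !ffunE; case: eqP.
have Htr : 0 < tr u v.
  rewrite /tr /trans (bigD1 i) //= ifT; last first.
    by apply/forallP => j; apply/implyP => Hj; rewrite Hev (negbTE Hj).
  apply: (@lt_le_trans _ _ (n%:R^-1 * q i (emb u) (emb v i))).
    rewrite Hev eqxx; apply: mulr_gt0; first by rewrite invr_gt0 ltr0n.
    by rewrite q_pos.
  rewrite lerDl; apply: sumr_ge0 => i' _; case: ifP => // _; apply: mulr_ge0.
    by rewrite invr_ge0 ler0n.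
  exact: q_ge0.
exists v; split => //; first exact: tr_closed Hu Htr.
rewrite /V (bigD1 i) //= [X in (_ < X)%N](bigD1 i) //= Hev eqxx.
rewrite (eq_bigr (fun j => `|emb u j - theta|%N)); first by rewrite ltn_add2r.
by move=> j Hj; rewrite Hev (negbTE Hj).
Qed.

End WithI.

Definition delta : R :=
  \prod_(p : Sf * Sf) (if 0 < tr p.1 p.2 then Num.min (tr p.1 p.2) 1 else 1).

Lemma delta_gt0 : 0 < delta.
Proof.
apply: prodr_gt0 => p _; case: ifP => // H.
by rewrite lt_min H ltr01.
Qed.

Lemma delta_le1 : delta <= 1.
Proof.
apply: prodr_ile1 => p _; case: ifP => H; last by rewrite ler01 lexx.
by rewrite le_min ge_min lexx orbT (ltW H) ler01.
Qed.

Lemma delta_le u v : 0 < tr u v -> delta <= tr u v.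
Proof.
move=> H; rewrite /delta (bigD1 (u, v)) //= H.
apply: le_trans (ler_piMr _ _) _.
- by rewrite le_min (ltW H) ler01.
- apply: prodr_ile1 => p _; case: ifP => H'; last by rewrite ler01 lexx.
  by rewrite le_min ge_min lexx orbT (ltW H') ler01.
by rewrite ge_min lexx.
Qed.

Definition Top (f : Sf -> R) : Sf -> R := fun u => \sum_v tr u v * f v.
Definition ind (v : Sf) : R := (v == cS)%:R.
Definition g m := iter m Top ind.

Lemma gS m : g m.+1 = Top (g m).
Proof. by []. Qed.

Lemma g_ge0 m v : 0 <= g m v.
Proof.
elim: m v => [|m IH] v; first by rewrite /g /= /ind ler0n.
by rewrite gS; apply: sumr_ge0 => w _; apply: mulr_ge0; [exact: tr_ge0 | exact: IH].
Qed.

Lemma Top_c f : Top f cS = f cS.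
Proof.
rewrite /Top (bigD1 cS) //= tr_cc mul1r big1 ?addr0 //.
by move=> v Hv; rewrite tr_c // mul0r.
Qed.

Lemma g_c m : g m cS = 1.
Proof. by elim: m => [|m IH]; [rewrite /g /= /ind eqxx | rewrite gS Top_c]. Qed.

Lemma Top_ge_one f u v : (forall w, 0 <= f w) -> tr u v * f v <= Top f u.
Proof.
move=> Hf; rewrite /Top (bigD1 v) //= lerDl; apply: sumr_ge0 => w _.
by apply: mulr_ge0; [exact: tr_ge0 | exact: Hf].
Qed.

Lemma claimA (I : {set 'I_n}) : (forall M : {set 'I_n}, M != finset.set0 -> strictly_cohesive W M ->
     exists2 i, i \in M & i \in I) ->
  forall j u, inI I u -> (V u <= j)%N -> delta ^+ j <= g j u.
Proof.
move=> Hcoh j; elim: j => [|j IH] u Hu HV.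
  have -> : u = cS.
    apply: eq_cS => j; move: HV; rewrite leqn0 /V sum_nat_eq0 => /forallP /(_ j) /eqP.
    lia.
  by rewrite g_c expr0.
case: (eqVneq u cS) => [->|Hne].
  by rewrite g_c exprn_ile1 // ?delta_le1 // ltW // delta_gt0.
have [v [Hv HVv Htr]] := step_Sf Hcoh Hu Hne.
apply: le_trans (@Top_ge_one (g j) u v (@g_ge0 j)); rewrite exprS.
apply: ler_pM.
- exact: ltW delta_gt0.
- by apply: exprn_ge0; exact: ltW delta_gt0.
- exact: delta_le.
apply: IH => //; rewrite -ltnS; exact: leq_trans HVv HV.
Qed.

Lemma Top_mono I m f h : (forall v, inI I v -> f v <= h v) ->
  forall u, inI I u -> iter m Top f u <= iter m Top h u.
Proof.
move=> Hfh; elim: m => [|m IH] u Hu /=; first exact: Hfh.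
apply: ler_sum => v _; have := tr_ge0 u v; rewrite le_eqVlt => /orP [/eqP <-|Hp].
  by rewrite !mul0r.
apply: ler_wpM2l; first exact: ltW.
by apply: IH; exact: tr_closed Hu Hp.
Qed.

Lemma Top_lin m a b f u :
  iter m Top (fun v => a + b * f v) u = a + b * iter m Top f u.
Proof.
elim: m u => [|m IH] u //=.
rewrite /Top; under eq_bigr do rewrite IH mulrDr mulrCA.
by rewrite big_split /= -mulr_suml tr_sum1 mul1r -mulr_sumr.
Qed.

Definition L := (n * s)%N.

Lemma V_le u : (V u <= L)%N.
Proof.
rewrite /V /L; apply: (@leq_trans (\sum_(j < n) s)).
  apply: leq_sum => j _; have := emb_inO u j; move: htheta; rewrite /inO; lia.
by rewrite big_const_ord iter_addn_0 mulnC.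
Qed.

Definition rr := 1 - delta ^+ L.

Lemma rr_ge0 : 0 <= rr.
Proof. by rewrite /rr subr_ge0 exprn_ile1 // ?delta_le1 // ltW // delta_gt0. Qed.

Lemma rr_lt1 : rr < 1.
Proof. by rewrite /rr ltrBlDr ltrDl exprn_gt0 // delta_gt0. Qed.

Lemma claimB (I : {set 'I_n}) : (forall M : {set 'I_n}, M != finset.set0 -> strictly_cohesive W M ->
     exists2 i, i \in M & i \in I) ->
  forall Q u, inI I u -> 1 - rr ^+ Q <= g (Q * L) u.
Proof.
move=> Hcoh Q; elim: Q => [|Q IH] u Hu.
  by rewrite mul0n expr0 subrr; exact: g_ge0.
rewrite mulSn /g iterD.
apply: le_trans (@Top_mono I L (fun v => (1 - rr ^+ Q) + rr ^+ Q * ind v) _ _ u Hu).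
  rewrite Top_lin -/(g L).
  apply: le_trans (_ : (1 - rr ^+ Q) + rr ^+ Q * delta ^+ L <= _).
    by rewrite exprS /rr; lra.
  rewrite lerD2l; apply: ler_wpM2l; first exact: exprn_ge0 rr_ge0.
  exact: (claimA Hcoh Hu (V_le u)).
move=> v Hv; rewrite /ind; case: eqP => [->|_].
  by rewrite -/(g (Q * L)) g_c mulr1 subrK.
by rewrite mulr0 addr0; exact: IH.
Qed.

Lemma geom_small (eps : R) : 0 < eps -> exists Q, rr ^+ Q <= eps.
Proof.
move=> He.
have Hr : `|rr| < 1 by rewrite ger0_norm ?rr_ge0 // rr_lt1.
have := cvg_expr Hr; move/cvgrPdist_lt => /(_ eps He) [N _ HN].
exists N; have := HN N (leqnn N); rewrite sub0r normrN ger0_norm ?exprn_ge0 ?rr_ge0 //.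
exact: ltW.
Qed.


Lemma sum_inv_n : \sum_(i < n) (n%:R^-1 : R) = 1.
Proof. by rewrite sumr_const card_ord -(mulr_natr (n%:R^-1)) mulVf // pnatr_eq0 -lt0n. Qed.

Section Meas.
Variables (d : measure_display) (T : measurableType d) (P : probability T R).
Variables (X : nat -> T -> state n) (x0 : state n).
Hypothesis HX : PID_process P q x0 X.

Local Open Scope classical_set_scope.

Definition evs (p : nat -> bool) (y : nat -> state n) : set T :=
  [set w | forall u, p u -> X u w = y u].

Lemma evs_meas p y : measurable (evs p y).
Proof.
have -> : evs p y = \bigcap_u (if p u then [set w | X u w = y u] else setT).
  apply/seteqP; split => w /= H.
    by move=> u _; move: (H u); case: (p u) => // Hx; exact: Hx.
  by move=> u Hu; have := H u I; rewrite Hu.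
apply: bigcapT_measurable => u; case: (p u); last exact: measurableT.
by case: HX => H _; exact: H.
Qed.

Definition cyl t xs := evs (fun u => (u <= t)%N) xs.
Definition Zset j a := evs (fun u => (a <= u <= a + j)%N) (fun _ => consensus n theta).
Definition Qv (xs : nat -> state n) t : R :=
  (if xs 0%N == x0 then 1 else 0) * \prod_(u < t) trans q (xs u) (xs u.+1).

Lemma P_cyl t xs : P (cyl t xs) = (Qv xs t)%:E.
Proof. by case: HX => _ H; exact: H. Qed.

Lemma base j t xs z : xs t = emb z ->
  (((Qv xs t) * g 0 z)%:E <= P (cyl t xs `&` Zset j (t + 0)))%E.
Proof.
move=> Hz; rewrite /g /= /ind; case: eqP => [Hc|_]; last by rewrite mulr0 measure_ge0.
rewrite mulr1 addn0.
pose xs' := fun u => if (u <= t)%N then xs u else consensus n theta.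
have Hxs't : forall u, (t <= u)%N -> xs' u = consensus n theta.
  move=> u Hu; rewrite /xs'; case: ifP => // Hut.
  have -> : u = t by apply/eqP; rewrite eqn_leq Hut Hu.
  by rewrite Hz Hc emb_cS.
have -> : Qv xs t = Qv xs' (t + j).
  rewrite /Qv big_split_ord /=.
  have -> : xs' 0%N = xs 0%N by rewrite /xs' leq0n.
  rewrite [X in _ = _ * (_ * X)]big1 ?mulr1; last first.
    move=> i _; rewrite !Hxs't ?leq_addr //; first exact: trans_cons.
    by rewrite -addnS leq_addr.
  congr (_ * _); apply: eq_bigr => i _; rewrite /xs' /=.
  by rewrite (ltnW (ltn_ord i)) (ltn_ord i).
rewrite -P_cyl; apply: le_measure; rewrite ?inE.
- exact: evs_meas.
- by apply: measurableI; exact: evs_meas.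
move=> w /= H; split => u Hu.
  by have := H u (leq_trans Hu (leq_addr j t)); rewrite /xs' Hu.
by case/andP: (Hu) => Hu1 Hu2; rewrite -(Hxs't u Hu1); exact: H.
Qed.

Lemma gen j m : forall t xs z, xs t = emb z ->
  ((Qv xs t * g m z)%:E <= P (cyl t xs `&` Zset j (t + m)))%E.
Proof.
elim: m => [|m IH] t xs z Hz; first exact: base.
pose ext := fun (y : Sf) u => if u == t.+1 then emb y else xs u.
have Hext : forall y, Qv (ext y) t.+1 = Qv xs t * tr z y.
  move=> y; rewrite /Qv big_ord_recr /= /ext eqxx.
  rewrite (_ : (t == t.+1) = false); last by rewrite eqn_leq ltnn andbF.
  rewrite Hz /tr -mulrA /=; congr (_ * (_ * _)).
  apply: eq_bigr => i _ /=.
  have Hi := ltn_ord i.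
  by rewrite (ltn_eqF (leqW Hi)) eqSS (ltn_eqF Hi).
have Hsum : Qv xs t * g m.+1 z = \sum_y Qv (ext y) t.+1 * g m y.
  by rewrite gS /Top mulr_sumr; apply: eq_bigr => y _; rewrite Hext mulrA.
rewrite Hsum -sumEFin.
pose F := fun y => cyl t.+1 (ext y) `&` Zset j (t + m.+1).
have HFm : forall y, measurable (F y) by move=> y; apply: measurableI; exact: evs_meas.
apply: (@le_trans _ _ (\sum_y P (F y))).
  apply: lee_sum => y _; rewrite /F -addSnnS; apply: IH.
  by rewrite /ext eqxx.
have -> : \sum_y P (F y) = P (\big[setU/set0]_(i < #|Sf|) F (enum_val i)).
  rewrite measure_bigsetU_ord //.
  - rewrite (reindex (@enum_rank Sf)) /=; last exact: onW_bij (@enum_rank_bij Sf).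
    by apply: eq_bigr => y _; rewrite enum_rankK.
  - move=> i i' _ _ [w [[H1 _] [H2 _]]].
    have := H1 t.+1 (leqnn _); have := H2 t.+1 (leqnn _).
    rewrite /ext eqxx => -> /emb_inj H; exact: enum_val_inj.
apply: le_measure; rewrite ?inE.
- by apply: bigsetU_measurable => i _; exact: HFm.
- by apply: measurableI; exact: evs_meas.
apply: (@big_ind _ (fun A : set T => A `<=` cyl t xs `&` Zset j (t + m.+1))).
- by [].
- by move=> A B HA HB w [/HA|/HB].
move=> i _ w [H1 H2]; split => //.
move=> u Hu; have := H1 u (leqW Hu); rewrite /ext.
by rewrite (ltn_eqF (Hu : (u < t.+1)%N)).
Qed.


Definition Eset := [set w | exists T0 : nat, forall t, (T0 <= t)%N -> X t w = consensus n theta].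

Lemma Eset_meas : measurable Eset.
Proof.
have -> : Eset = \bigcup_T0 evs (fun t => (T0 <= t)%N) (fun _ => consensus n theta).
  apply/seteqP; split => w /=.
    by move=> [T0 H]; exists T0.
  by move=> [T0 _ H]; exists T0.
by apply: bigcupT_measurable => T0; exact: evs_meas.
Qed.

Lemma conv_main (I : {set 'I_n}) :
  (forall M : {set 'I_n}, M != finset.set0 -> strictly_cohesive W M ->
     exists2 i, i \in M & i \in I) ->
  admissible k s theta I x0 -> as_converges_to_consensus theta P X.
Proof.
move=> Hcoh /andP [/forallP HO /forall_inP HI].
pose z0 : Sf := [ffun i => inord (absz (x0 i - k))].
have Hz0 : emb z0 = x0.
  by apply/ffunP => i; rewrite !ffunE inO_inord.
have Hz0I : inI I z0 by apply/forall_inP => j Hj; rewrite Hz0 HI.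
rewrite /as_converges_to_consensus -/Eset.
apply/eqP; rewrite eq_le probability_le1 ?Eset_meas //=.
apply/lee_addgt0Pr => eps He.
have [Q HQ] := geom_small He.
set m := (Q * L)%N.
have Hg : 1 - eps <= g m z0.
  apply: le_trans (claimB Hcoh Q Hz0I); by rewrite lerD2l lerN2.
have HZ : forall j, ((g m z0)%:E <= P (Zset j m))%E.
  move=> j; have := @gen j m 0 (fun _ => x0) z0 (esym Hz0).
  rewrite /Qv /= eqxx big_ord0 !mul1r add0n => H; apply: le_trans H _.
  apply: le_measure; rewrite ?inE.
  - by apply: measurableI; exact: evs_meas.
  - exact: evs_meas.
  by move=> w [].
have Hcap : ((g m z0)%:E <= P (\bigcap_j Zset j m))%E.
  have H1 : (P (Zset 0 m) < +oo)%E.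
    apply: (le_lt_trans (probability_le1 P (evs_meas _ _))); exact: ltry.
  have H2 : forall j, measurable (Zset j m) by move=> j; exact: evs_meas.
  have H3 : measurable (\bigcap_j Zset j m).
    by apply: bigcapT_measurable => j; exact: evs_meas.
  have H4 : {homo (fun j => Zset j m) : a b / (a <= b)%N >-> (b <= a)%O}.
    move=> a b Hab; rewrite subsetEset => w H u /andP [Hu1 Hu2]; apply: H.
    by rewrite Hu1 /= (leq_trans Hu2) // leq_add2l.
  have Hc := @nonincreasing_cvg_mu _ _ _ P (fun j => Zset j m) H1 H2 H3 H4.
  rewrite -(cvg_lim (@ereal_hausdorff R) Hc).
  apply: lime_ge; first by apply/cvg_ex; eexists; exact: Hc.
  by apply: nearW => j; exact: HZ.
have Hsub : \bigcap_j Zset j m `<=` Eset.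
  move=> w H; exists m => t Ht.
  have := H (t - m)%N Logic.I; rewrite /Zset /evs /= => H'; apply: H'.
  by rewrite Ht /= subnKC.
have HPE : ((g m z0)%:E <= P Eset)%E.
  apply: le_trans Hcap _; apply: le_measure; rewrite ?inE //.
  - by apply: bigcapT_measurable => j; exact: evs_meas.
  - exact: Eset_meas.
apply: le_trans (leeD HPE (lexx _)); rewrite -EFinD lee_fin; lra.
exact: Eset_meas.
Qed.



Lemma stuck (M : {set 'I_n}) (a : int) :
  strictly_cohesive W M -> inO k s a ->
  x0 = [ffun j => if j \in M then a else theta] -> x0 != consensus n theta ->
  ~ as_converges_to_consensus theta P X.
Proof.
move=> Hsc HaO Hx0 Hne.
have HO : forall j, inO k s (x0 j).
  by move=> j; rewrite Hx0 ffunE; case: ifP.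
have Hself : forall i z, Pset W k s theta i x0 z -> z = x0 i.
  move=> i z /and3P [_ Hsoc Hcog].
  case: (boolP (i \in M)) => HiM; last first.
    by move: Hcog; rewrite /C_cog Hx0 !ffunE (negbTE HiM) subrr; lia.
  apply/eqP; apply/negPn/negP => Hza.
  have Hxi : x0 i = a by rewrite Hx0 ffunE HiM.
  have := @Cge x0 i z a `|z - a| (fun j => j \in M).
  have Hhyp : forall j, if j \in M then `|a - x0 j| + `|z - a| <= `|z - x0 j|
             else `|a - x0 j| <= `|z - x0 j| + `|z - a|.
    move=> j; rewrite Hx0 ffunE; case: (j \in M); lia.
  move=> /(_ Hhyp) Hc; rewrite Hxi in Hsoc.
  have Hsum := sumW_split i (fun j => j \in M).
  have Hgt : 1 / 2 < \sum_(j in M) W i j by move/forall_inP: Hsc; apply.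
  have Hd : 1 <= (`|z - a|%:~R : R).
    by rewrite -[1]/((1 : int)%:~R) ler_int; move: Hza; rewrite Hxi; lia.
  have := le_trans Hc Hsoc; rewrite -[X in _ <= X]addr0 lerD2l.
  apply/negP; rewrite -ltNge; apply: mulr_gt0; first exact: lt_le_trans ltr01 Hd.
  by move: Hsum Hgt; lra.
have Hq1 : forall i, q i x0 (x0 i) = 1.
  move=> i; have := q_sum i HO.
  have HxiO := HO i.
  set ui : 'I_s.+1 := inord (absz (x0 i - k)).
  have Hui : k + (ui : nat)%:Z = x0 i by exact: inO_inord.
  rewrite (bigD1 ui) //= Hui big1 ?addr0 //.
  move=> u Hu; apply: q_zero => //; apply/negP => /Hself Hz.
  move/negP: Hu; apply; apply/eqP/val_inj => /=.
  by move: Hz; rewrite -Hui => /addrI [].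
have Htr : trans q x0 x0 = 1.
  rewrite /trans (eq_bigr (fun _ => n%:R^-1)) ?sum_inv_n // => i _.
  rewrite ifT ?Hq1 ?mulr1 //.
  by apply/forallP => j; apply/implyP => _.
have Hcyl : forall t, P (cyl t (fun _ => x0)) = 1%E.
  move=> t; rewrite P_cyl /Qv /= eqxx big1 ?mulr1 // => u _; exact: Htr.
move=> HE.
have HEt : forall T0, P (evs (fun t => (T0 <= t)%N) (fun _ => consensus n theta)) = 0%E.
  move=> T0; apply/eqP; rewrite eq_le measure_ge0 andbT.
  apply: (@le_trans _ _ (P (~` cyl T0 (fun _ => x0)))).
    apply: le_measure; rewrite ?inE.
    - exact: evs_meas.
    - by apply: measurableC; exact: evs_meas.
    move=> w H Hc; have := H T0 (leqnn _); have := Hc T0 (leqnn _) => -> Hx.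
    by move: Hne; rewrite Hx eqxx.
  rewrite probability_setC; last exact: evs_meas.
  rewrite P_cyl /Qv /= eqxx big1 ?mulr1; first by rewrite subee.
  by move=> u _; exact: Htr.
have Hs : Eset `<=` \bigcup_T0 evs (fun t => (T0 <= t)%N) (fun _ => consensus n theta).
  by move=> w [T0 H]; exists T0.
have := @measure_sigma_subadditive _ _ _ P Eset
  (fun T0 => evs (fun t => (T0 <= t)%N) (fun _ => consensus n theta))
  (fun _ => evs_meas _ _) Eset_meas Hs.
rewrite eseries0; last by move=> i _ _; exact: HEt.
have HE' : P Eset = 1%E := HE.
move=> H; have : (P Eset <= 0)%E := H.
by rewrite HE' lee_fin ler10.
Qed.

End Meas.

End Basic.

Theorem theorem6 (R : realType) (n : nat) (hn : (0 < n)%N)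
  (W : 'I_n -> 'I_n -> R) (hW : row_stochastic W)
  (k : int) (s : nat) (hs : (1 <= s)%N) (theta : int) (htheta : inO k s theta)
  (q : 'I_n -> state n -> int -> R) (hq : valid_update W k s theta q)
  (I : {set 'I_n})
  (d : measure_display) (T : measurableType d) (P : probability T R)
  (X : state n -> nat -> T -> state n)
  (hX : forall x0, admissible k s theta I x0 ->
          PID_process P q x0 (X x0)) :
  (forall x0, admissible k s theta I x0 ->
     as_converges_to_consensus theta P (X x0)) <->
  (forall M : {set 'I_n}, M != finset.set0 -> strictly_cohesive W M ->
     exists2 i, i \in M & i \in I).
Proof.
split; last first.
  by move=> Hcoh x0 Hadm; exact: (conv_main hn hq hW htheta (hX x0 Hadm) Hcoh Hadm).
move=> H1 M HM Hsc.
case: (boolP [exists i in M, i \in I]) => [/exists_inP [i Hi1 Hi2]|Hno]; first by exists i.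
exfalso.
have [a [HaO Hat]] : exists a, inO k s a /\ a != theta.
  move: htheta hs; rewrite /inO => /andP [Ht1 Ht2] Hs1.
  case: (boolP (theta + 1 <= k + s%:Z)) => H.
    exists (theta + 1); split; first by apply/andP; split; lia.
    by apply/eqP; lia.
  exists (theta - 1); split; first by apply/andP; split; move: H; rewrite -ltNge; lia.
  by apply/eqP; lia.
pose x0 : state n := [ffun j => if j \in M then a else theta].
have Hadm : admissible k s theta I x0.
  apply/andP; split.
    by apply/forallP => j; rewrite ffunE; case: ifP.
  apply/forall_inP => j Hj; rewrite ffunE ifF //; apply/negP => HjM.
  by move/negP: Hno; apply; apply/exists_inP; exists j.
have Hne : x0 != consensus n theta.
  case/set0Pn: HM => j Hj; apply/eqP => /ffunP /(_ j); rewrite !ffunE Hj.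
  by move/eqP: Hat.
exact: (stuck hn hq hW htheta (hX x0 Hadm) Hsc HaO erefl Hne (H1 x0 Hadm)).
Qed.
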